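(* For every integer $g\ge 3$, the graph $W'_g$ does not belong to 2-CBU.
   Context: For $g\ge 3$, the double wheel $W^2_g$ is obtained from a cycle $C_g$ of length $g$ by adding two non-adjacent new vertices, each adjacent to every vertex of $C_g$; an edge not contained in $C_g$ is called a ray. $W'_g$ is obtained from $W^2_g$ by subdividing every ray $\lfloor g/2\rfloor$ times (replacing it by a path with $\lfloor g/2\rfloor$ internal vertices); it is planar of girth $g$. Let $e_1,e_2$ be the standard basis of $\mathbb{R}^2$. A graph belongs to 2-CBU if one can assign to each vertex an axis-parallel rectangle (product of two closed intervals of positive length) in $\mathbb{R}^2$ such that the rectangles have pairwise disjoint interiors, two distinct vertices are adjacent iff their rectangles intersect, and any two intersecting rectangles intersect in a segment of positive length orthogonal to $e_1$. *)

(* Defs.v *)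
From Stdlib Require Import Reals Arith.
Open Scope R_scope.

Record rect := Rect { xl : R; xr : R; yl : R; yr : R }.

Definition proper_rect (r : rect) : Prop := xl r < xr r /\ yl r < yr r.

Definition in_rect (r : rect) (p : R * R) : Prop :=
  xl r <= fst p <= xr r /\ yl r <= snd p <= yr r.

Definition in_interior (r : rect) (p : R * R) : Prop :=
  xl r < fst p < xr r /\ yl r < snd p < yr r.

Definition meet_in_vertical_segment (r1 r2 : rect) : Prop :=
  exists x0 a b : R, a < b /\
    forall p : R * R, (in_rect r1 p /\ in_rect r2 p) <->
                      (fst p = x0 /\ a <= snd p <= b).

Definition in_2CBU {V : Type} (P : V -> Prop) (adj : V -> V -> Prop) : Prop :=
  exists f : V -> rect,
    (forall v, P v -> proper_rect (f v)) /\
    (forall u v, P u -> P v -> u <> v ->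
       ~ (exists p, in_interior (f u) p /\ in_interior (f v) p)) /\
    (forall u v, P u -> P v -> u <> v ->
       (adj u v <-> exists p, in_rect (f u) p /\ in_rect (f v) p)) /\
    (forall u v, P u -> P v -> u <> v ->
       (exists p, in_rect (f u) p /\ in_rect (f v) p) ->
       meet_in_vertical_segment (f u) (f v)).

(* Vertices: cycle vertices Cyc i (i < g), the two hubs Hub h (h : bool),
   and the subdivision vertices Sub h i k (i < g, k < floor(g/2)) which are
   the internal vertices of the subdivided ray from Hub h to Cyc i, in order
   Hub h - Sub h i 0 - Sub h i 1 - ... - Sub h i (m-1) - Cyc i. *)
Inductive Wvert : Type :=
| Cyc : nat -> Wvert
| Hub : bool -> Wvert
| Sub : bool -> nat -> nat -> Wvert.

Definition Wvalid (g : nat) (v : Wvert) : Prop :=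
  match v with
  | Cyc i => (i < g)%nat
  | Hub _ => True
  | Sub _ i k => (i < g)%nat /\ (k < g / 2)%nat
  end.

Definition Wedge0 (g : nat) (u v : Wvert) : Prop :=
  match u, v with
  | Cyc i, Cyc j => j = ((i + 1) mod g)%nat
  | Hub h, Sub h' _ k => h' = h /\ k = 0%nat
  | Sub h i k, Sub h' i' k' => h' = h /\ i' = i /\ k' = (k + 1)%nat
  | Sub _ i k, Cyc j => j = i /\ k = (g / 2 - 1)%nat
  | _, _ => False
  end.

Definition Wadj (g : nat) (u v : Wvert) : Prop := Wedge0 g u v \/ Wedge0 g v u.

(* Main.v *)
Require Import Defs.
From Stdlib Require Import Reals Arith.
From Stdlib Require Import Lra Lia ZArith Bool.
Import Defs.
Open Scope R_scope.

Definition Wvert_eq_dec : forall u v : Wvert, {u = v} + {u <> v}.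
Proof. decide equality; try apply Nat.eq_dec; apply Bool.bool_dec. Defined.

Definition ev (n : Z) : Prop := Z.even n = true.

Lemma ev_add a b : ev a -> ev b -> ev (a + b).
Proof. unfold ev; intros; rewrite Z.even_add; rewrite H, H0; reflexivity. Qed.
Lemma ev_opp a : ev a -> ev (- a).
Proof. unfold ev; intros; rewrite Z.even_opp; auto. Qed.
Lemma ev_sub a b : ev a -> ev b -> ev (a - b).
Proof. intros; apply ev_add; auto; apply ev_opp; auto. Qed.
Lemma ev_eq a b : a = b -> ev a -> ev b.
Proof. intros ->; auto. Qed.
Lemma ev_0 : ev 0. Proof. reflexivity. Qed.
Lemma ev_2m m : ev (2 * m). Proof. unfold ev; rewrite Z.even_mul; reflexivity. Qed.
Lemma not_ev_1 : ~ ev 1. Proof. unfold ev; simpl; discriminate. Qed.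

Fixpoint sumZ (n : nat) (F : nat -> Z) : Z :=
  match n with O => 0%Z | S n' => (sumZ n' F + F n')%Z end.

Lemma sumZ_ext n F G : (forall j, (j < n)%nat -> F j = G j) -> sumZ n F = sumZ n G.
Proof. induction n; simpl; intros; auto. rewrite IHn, H; auto. Qed.
Lemma sumZ_add n F G : sumZ n (fun j => F j + G j)%Z = (sumZ n F + sumZ n G)%Z.
Proof. induction n; simpl; auto; rewrite IHn; ring. Qed.
Lemma sumZ_sub n F G : sumZ n (fun j => F j - G j)%Z = (sumZ n F - sumZ n G)%Z.
Proof. induction n; simpl; auto; rewrite IHn; ring. Qed.
Lemma sumZ_ev n F : (forall j, (j < n)%nat -> ev (F j)) -> ev (sumZ n F).
Proof. induction n; simpl; intros. apply ev_0. apply ev_add; auto. Qed.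
Lemma sumZ_shift n F : sumZ n (fun j => F (S j)) = (sumZ n F + F n - F O)%Z.
Proof. induction n; simpl. ring. rewrite IHn. ring. Qed.
Lemma sumZ_zero n : sumZ n (fun _ => 0%Z) = 0%Z.
Proof. induction n; simpl; auto; rewrite IHn; ring. Qed.
Lemma sumZ_two n F a : (S a < n)%nat -> (forall j, (j < n)%nat -> j <> a -> j <> S a -> F j = 0%Z) ->
  sumZ n F = (F a + F (S a))%Z.
Proof.
  induction n; intros. lia. simpl.
  destruct (Nat.eq_dec n (S a)).
  - subst. simpl. rewrite (sumZ_ext a F (fun _ => 0%Z)).
    + rewrite sumZ_zero. ring.
    + intros; apply H0; lia.
  - assert (S a < n)%nat by lia.
    rewrite IHn; auto. rewrite (H0 n); lia.
Qed.

Section Geo.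
Variable g : nat.
Variable f : Wvert -> rect.
Hypothesis Hprop : forall v, Wvalid g v -> proper_rect (f v).
Hypothesis Hint : forall u v, Wvalid g u -> Wvalid g v -> u <> v ->
       ~ (exists p, in_interior (f u) p /\ in_interior (f v) p).
Hypothesis Hadj : forall u v, Wvalid g u -> Wvalid g v -> u <> v ->
       (Wadj g u v <-> exists p, in_rect (f u) p /\ in_rect (f v) p).
Hypothesis Hseg : forall u v, Wvalid g u -> Wvalid g v -> u <> v ->
       (exists p, in_rect (f u) p /\ in_rect (f v) p) ->
       meet_in_vertical_segment (f u) (f v).

Definition contact (r s : rect) : Prop :=
  (xr r = xl s \/ xr s = xl r) /\ yl r < yr s /\ yl s < yr r.

Lemma contact_of u v : Wvalid g u -> Wvalid g v -> u <> v -> Wadj g u v -> contact (f u) (f v).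
Proof.
  intros Hu Hv Huv Ha.
  assert (Hi := proj1 (Hadj u v Hu Hv Huv) Ha).
  destruct (Hseg u v Hu Hv Huv Hi) as (x0 & a & b & Hab & Hiff).
  destruct (Hprop u Hu) as [Pu1 Pu2]. destruct (Hprop v Hv) as [Pv1 Pv2].
  assert (Ha1 := proj2 (Hiff (x0, a)) (conj eq_refl (conj (Rle_refl a) (Rlt_le _ _ Hab)))).
  assert (Hb1 := proj2 (Hiff (x0, b)) (conj eq_refl (conj (Rlt_le _ _ Hab) (Rle_refl b)))).
  destruct Ha1 as [[[Ha1 Ha2] [Ha3 Ha4]] [[Ha5 Ha6] [Ha7 Ha8]]].
  destruct Hb1 as [[[Hb1 Hb2] [Hb3 Hb4]] [[Hb5 Hb6] [Hb7 Hb8]]].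
  simpl in *.
  unfold contact. split; [|split; lra].
  set (U := f u) in *. set (W := f v) in *.
  assert (Hpt : forall x', Rmax (xl U) (xl W) <= x' <= Rmin (xr U) (xr W) -> x' = x0).
  { intros x' [H1 H2].
    assert (H := proj1 (Hiff (x', a))). simpl in H.
    assert (xl U <= x') by (eapply Rle_trans; [apply Rmax_l|exact H1]).
    assert (x' <= xr U) by (eapply Rle_trans; [exact H2|apply Rmin_l]).
    assert (xl W <= x') by (eapply Rle_trans; [apply Rmax_r|exact H1]).
    assert (x' <= xr W) by (eapply Rle_trans; [exact H2|apply Rmin_r]).
    apply H. unfold in_rect; simpl; repeat split; lra. }
  unfold Rmax, Rmin in Hpt.
  destruct (Rle_dec (xl U) (xl W)); destruct (Rle_dec (xr U) (xr W)).
  - destruct (Rlt_dec (xl W) (xr U)).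
    + assert (H1 := Hpt (xl W)). assert (H2 := Hpt (xr U)). exfalso.
      assert (xl W = x0) by (apply H1; lra). assert (xr U = x0) by (apply H2; lra). lra.
    + left; lra.
  - exfalso. assert (H1 := Hpt (xl W)). assert (H2 := Hpt (xr W)).
    assert (xl W = x0) by (apply H1; lra). assert (xr W = x0) by (apply H2; lra). lra.
  - exfalso. assert (H1 := Hpt (xl U)). assert (H2 := Hpt (xr U)).
    assert (xl U = x0) by (apply H1; lra). assert (xr U = x0) by (apply H2; lra). lra.
  - destruct (Rlt_dec (xl U) (xr W)).
    + assert (H1 := Hpt (xl U)). assert (H2 := Hpt (xr W)). exfalso.
      assert (xl U = x0) by (apply H1; lra). assert (xr W = x0) by (apply H2; lra). lra.
    + right; lra.
Qed.

Lemma nonadj_disj u v : Wvalid g u -> Wvalid g v -> u <> v -> ~ Wadj g u v ->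
  forall P, ~ (in_rect (f u) P /\ in_rect (f v) P).
Proof. intros Hu Hv Huv Hn P HP. apply Hn. apply (Hadj u v Hu Hv Huv). eauto. Qed.

Lemma triangle u v w : Wvalid g u -> Wvalid g v -> Wvalid g w -> u <> v -> v <> w -> u <> w ->
  Wadj g u v -> Wadj g v w -> Wadj g u w -> False.
Proof.
  intros Hu Hv Hw H1 H2 H3 A1 A2 A3.
  destruct (contact_of u v Hu Hv H1 A1) as [C1 _].
  destruct (contact_of v w Hv Hw H2 A2) as [C2 _].
  destruct (contact_of u w Hu Hw H3 A3) as [C3 _].
  destruct (Hprop u Hu), (Hprop v Hv), (Hprop w Hw).
  destruct C1, C2, C3; lra.
Qed.

Lemma Wadj_sym u v : Wadj g u v -> Wadj g v u.
Proof. unfold Wadj; tauto. Qed.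

Lemma triple u v w P : Wvalid g u -> Wvalid g v -> Wvalid g w -> u <> v -> v <> w -> u <> w ->
  in_rect (f u) P -> in_rect (f v) P -> in_rect (f w) P -> False.
Proof.
  intros Hu Hv Hw H1 H2 H3 Pu Pv Pw.
  apply (triangle u v w); auto.
  - apply (Hadj u v); eauto.
  - apply (Hadj v w); eauto.
  - apply (Hadj u w); eauto.
Qed.

Lemma common_int r s P : proper_rect s -> in_interior r P -> in_rect s P ->
  exists Q, in_interior r Q /\ in_interior s Q.
Proof.
  intros [S1 S2] [[I1 I2] [I3 I4]] [[R1 R2] [R3 R4]].
  set (lx := Rmax (xl r) (xl s)). set (hx := Rmin (xr r) (xr s)).
  set (ly := Rmax (yl r) (yl s)). set (hy := Rmin (yr r) (yr s)).
  assert (lx < hx /\ ly < hy) as [Lx Ly].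
  { unfold lx, hx, ly, hy, Rmax, Rmin.
    destruct (Rle_dec (xl r) (xl s)), (Rle_dec (xr r) (xr s)),
             (Rle_dec (yl r) (yl s)), (Rle_dec (yr r) (yr s)); split; lra. }
  exists ((lx + hx)/2, (ly + hy)/2).
  assert (xl r <= lx /\ xl s <= lx /\ hx <= xr r /\ hx <= xr s) as (?&?&?&?)
    by (unfold lx, hx; repeat split; [apply Rmax_l|apply Rmax_r|apply Rmin_l|apply Rmin_r]).
  assert (yl r <= ly /\ yl s <= ly /\ hy <= yr r /\ hy <= yr s) as (?&?&?&?)
    by (unfold ly, hy; repeat split; [apply Rmax_l|apply Rmax_r|apply Rmin_l|apply Rmin_r]).
  unfold in_interior; simpl; repeat split; lra.
Qed.

Lemma int_not_in w v P : Wvalid g w -> Wvalid g v -> w <> v ->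
  in_interior (f w) P -> ~ in_rect (f v) P.
Proof.
  intros Hw Hv Hwv HI HR.
  destruct (common_int _ _ _ (Hprop v Hv) HI HR) as [Q HQ].
  apply (Hint w v Hw Hv Hwv); eauto.
Qed.

End Geo.

Lemma ev_mul a b : ev b -> ev (a * b).
Proof. unfold ev; intros; rewrite Z.even_mul, H; apply Bool.orb_true_r. Qed.

Definition act (r : rect) (x : R) : Z :=
  if Rle_dec (xl r) x then if Rlt_dec x (xr r) then 1%Z else 0%Z else 0%Z.
Definition Uy (r : rect) (y : R) : Z := if Rlt_dec y (yl r) then 1%Z else 0%Z.
Definition A (r : rect) (x y : R) : Z := (act r x * Uy r y)%Z.
Definition Xi (x1 x2 t : R) : Z :=
  if Rlt_dec x1 t then if Rle_dec t x2 then 1%Z else 0%Z else 0%Z.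

Lemma act_diff r x1 x2 : xl r < xr r -> x1 <= x2 ->
  ev (act r x2 - act r x1 - Xi x1 x2 (xl r) - Xi x1 x2 (xr r)).
Proof.
  intros H1 H2. unfold act, Xi.
  destruct (Rle_dec (xl r) x2); destruct (Rlt_dec x2 (xr r));
  destruct (Rle_dec (xl r) x1); destruct (Rlt_dec x1 (xr r));
  destruct (Rlt_dec x1 (xl r)); destruct (Rle_dec (xl r) x2);
  destruct (Rlt_dec x1 (xr r)); destruct (Rle_dec (xr r) x2);
  try reflexivity; exfalso; lra.
Qed.

Section Par.
Variable g : nat.
Variable f : Wvert -> rect.
Hypothesis Hprop : forall v, Wvalid g v -> proper_rect (f v).
Hypothesis Hint : forall u v, Wvalid g u -> Wvalid g v -> u <> v ->
       ~ (exists p, in_interior (f u) p /\ in_interior (f v) p).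
Hypothesis Hadj : forall u v, Wvalid g u -> Wvalid g v -> u <> v ->
       (Wadj g u v <-> exists p, in_rect (f u) p /\ in_rect (f v) p).
Hypothesis Hseg : forall u v, Wvalid g u -> Wvalid g v -> u <> v ->
       (exists p, in_rect (f u) p /\ in_rect (f v) p) ->
       meet_in_vertical_segment (f u) (f v).

Variable k : nat.
Variable z : nat -> Wvert.
Hypothesis Hzk : z k = z O.
Hypothesis Hzv : forall j, (j <= k)%nat -> Wvalid g (z j).
Hypothesis Hze : forall j, (j < k)%nat -> z j <> z (S j) /\ Wadj g (z j) (z (S j)).

Definition LftV (j : nat) : Wvert :=
  if Req_EM_T (xr (f (z j))) (xl (f (z (S j)))) then z j else z (S j).
Definition RgtV (j : nat) : Wvert :=
  if Req_EM_T (xr (f (z j))) (xl (f (z (S j)))) then z (S j) else z j.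

Definition par (x y : R) : Z := sumZ k (fun j => A (f (LftV j)) x y).

Definition Zfree (x y : R) : Prop := forall j, (j < k)%nat -> ~ in_rect (f (z j)) (x, y).

Lemma Zfree_S x y j : Zfree x y -> (j < k)%nat -> ~ in_rect (f (z (S j))) (x, y).
Proof.
  intros H Hj. destruct (Nat.eq_dec (S j) k).
  - rewrite e, Hzk. apply H. lia.
  - apply H. lia.
Qed.

Lemma LR_spec j : (j < k)%nat ->
  ((LftV j = z j /\ RgtV j = z (S j)) \/ (LftV j = z (S j) /\ RgtV j = z j)) /\
  xr (f (LftV j)) = xl (f (RgtV j)) /\
  yl (f (LftV j)) < yr (f (RgtV j)) /\ yl (f (RgtV j)) < yr (f (LftV j)).
Proof.
  intros Hj. destruct (Hze j Hj) as [Hne Ha].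
  destruct (contact_of g f Hprop Hadj Hseg (z j) (z (S j)) (Hzv j ltac:(lia)) (Hzv (S j) ltac:(lia)) Hne Ha)
    as [Hc [Hy1 Hy2]].
  unfold LftV, RgtV. destruct (Req_EM_T (xr (f (z j))) (xl (f (z (S j))))).
  - split; [left; auto|]. auto.
  - split; [right; auto|]. destruct Hc; [contradiction|]. auto.
Qed.

Lemma LftV_in j : LftV j = z j \/ LftV j = z (S j).
Proof. unfold LftV; destruct Req_EM_T; auto. Qed.
Lemma LftV_valid j : (j < k)%nat -> Wvalid g (LftV j).
Proof. intros; unfold LftV; destruct Req_EM_T; apply Hzv; lia. Qed.
Lemma RgtV_valid j : (j < k)%nat -> Wvalid g (RgtV j).
Proof. intros; unfold RgtV; destruct Req_EM_T; apply Hzv; lia. Qed.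

Lemma par_H x1 x2 y : x1 <= x2 -> (forall x, x1 <= x <= x2 -> Zfree x y) ->
  ev (par x2 y - par x1 y).
Proof.
  intros Hx Hfree.
  set (Phi := fun v => (Uy (f v) y * Xi x1 x2 (xl (f v)))%Z).
  assert (Hj : forall j, (j < k)%nat ->
    ev ((A (f (LftV j)) x2 y - A (f (LftV j)) x1 y) - (Phi (z j) + Phi (z (S j))))).
  { intros j Hj.
    destruct (LR_spec j Hj) as [Hlr [Hb [Ho1 Ho2]]].
    set (L := f (LftV j)) in *. set (Rg := f (RgtV j)) in *.
    assert (HL : proper_rect L) by (apply Hprop, LftV_valid; auto).
    assert (F2 : (Uy L y * Xi x1 x2 (xr L) = Uy Rg y * Xi x1 x2 (xl Rg))%Z).
    { rewrite Hb. unfold Xi.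
      destruct (Rlt_dec x1 (xl Rg)); [|ring]. destruct (Rle_dec (xl Rg) x2); [|ring].
      assert (Hf := Hfree (xl Rg) ltac:(lra)).
      assert (Hnot : forall v, v = z j \/ v = z (S j) -> ~ in_rect (f v) (xl Rg, y)).
      { intros v [-> | ->]. exact (Hf j Hj). exact (Zfree_S _ _ j Hf Hj). }
      assert (NL : ~ in_rect L (xl Rg, y)) by (apply Hnot; destruct Hlr as [[E _]|[E _]]; rewrite E; auto).
      assert (NR : ~ in_rect Rg (xl Rg, y)) by (apply Hnot; destruct Hlr as [[_ E]|[_ E]]; rewrite E; auto).
      assert (HR : proper_rect Rg) by (apply Hprop, RgtV_valid; auto).
      destruct HL, HR.
      unfold in_rect in NL, NR; simpl in NL, NR.
      unfold Uy. destruct (Rlt_dec y (yl L)); destruct (Rlt_dec y (yl Rg)); try ring;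
      exfalso.
      all: first [apply NR; repeat split; simpl; lra | apply NL; repeat split; simpl; lra]. }
    assert (F3 : (Phi (LftV j) + Phi (RgtV j) = Phi (z j) + Phi (z (S j)))%Z).
    { destruct Hlr as [[-> ->]|[-> ->]]; ring. }
    assert (Hd := act_diff L x1 x2 (proj1 HL) Hx).
    unfold A. 
    replace ((act L x2 * Uy L y - act L x1 * Uy L y - (Phi (z j) + Phi (z (S j)))))%Z
      with (Uy L y * (act L x2 - act L x1 - Xi x1 x2 (xl L) - Xi x1 x2 (xr L))
            + (Uy L y * Xi x1 x2 (xr L) - Uy Rg y * Xi x1 x2 (xl Rg)))%Z.
    2:{ rewrite <- F3. unfold Phi. fold L Rg. ring. }
    rewrite F2. apply ev_add. apply ev_mul; auto. replace (_ - _)%Z with 0%Z by ring. apply ev_0. }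
  assert (Hs := sumZ_ev k _ Hj).
  rewrite sumZ_sub in Hs.
  rewrite (sumZ_sub k (fun j => A (f (LftV j)) x2 y) (fun j => A (f (LftV j)) x1 y)) in Hs.
  rewrite (sumZ_add k (fun j => Phi (z j)) (fun j => Phi (z (S j)))) in Hs.
  rewrite (sumZ_shift k (fun j => Phi (z j))) in Hs.
  rewrite Hzk in Hs. unfold par.
  eapply ev_eq; [|apply (ev_add _ _ Hs (ev_2m (sumZ k (fun j : nat => Phi (z j)))))]. ring.
Qed.

Lemma par_V x y1 y2 : y1 <= y2 -> (forall y, y1 <= y <= y2 -> Zfree x y) ->
  par x y1 = par x y2.
Proof.
  intros Hy Hfree. unfold par. apply sumZ_ext. intros j Hj.
  assert (Hv := LftV_valid j Hj). destruct (Hprop _ Hv) as [P1 P2].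
  unfold A, act, Uy.
  destruct (Rle_dec (xl (f (LftV j))) x); [|ring].
  destruct (Rlt_dec x (xr (f (LftV j)))); [|ring].
  destruct (Rlt_dec y1 (yl (f (LftV j)))); destruct (Rlt_dec y2 (yl (f (LftV j)))); try ring;
    exfalso.
  - assert (Hf := Hfree (yl (f (LftV j))) ltac:(lra)).
    assert (Hnot : forall v, v = z j \/ v = z (S j) -> ~ in_rect (f v) (x, yl (f (LftV j)))).
    { intros v [-> | ->]. exact (Hf j Hj). exact (Zfree_S _ _ j Hf Hj). }
    assert (NL := Hnot _ (LftV_in j)).
    apply NL. unfold in_rect; simpl; repeat split; lra.
  - lra.
Qed.


Definition between (a b t : R) : Prop := (a <= t <= b) \/ (b <= t <= a).

Lemma par_V' x y1 y2 : (forall y, between y1 y2 y -> Zfree x y) -> par x y1 = par x y2.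
Proof.
  intros H. destruct (Rle_dec y1 y2).
  - apply par_V; auto. intros; apply H; left; auto.
  - symmetry; apply par_V; [lra|]. intros; apply H; right; auto.
Qed.

Lemma par_H' y x1 x2 : (forall x, between x1 x2 x -> Zfree x y) -> ev (par x1 y - par x2 y).
Proof.
  intros H. destruct (Rle_dec x1 x2).
  - eapply ev_eq; [|apply ev_opp, (par_H x1 x2 y); auto]. ring. intros; apply H; left; auto.
  - apply par_H; [lra|]. intros; apply H; right; auto.
Qed.

Lemma Lpath sx sy my ex : (forall h, between sy my h -> Zfree sx h) ->
  (forall x, between sx ex x -> Zfree x my) -> ev (par sx sy - par ex my).
Proof.
  intros H1 H2. rewrite (par_V' sx sy my H1). apply par_H'; auto.
Qed.

Definition notinZ (w : Wvert) : Prop := forall j, (j < k)%nat -> z j <> w.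

Lemma int_Zfree w x y : Wvalid g w -> notinZ w -> in_interior (f w) (x, y) -> Zfree x y.
Proof.
  intros Hw Hn HI j Hj. apply (int_not_in g f Hprop Hint w (z j)); auto.
  apply Hzv; lia. intro E; apply (Hn j Hj); auto.
Qed.

Definition center (r : rect) : R * R := ((xl r + xr r)/2, (yl r + yr r)/2).
Definition parP (P : R * R) : Z := par (fst P) (snd P).

Lemma center_int r : proper_rect r -> in_interior r (center r).
Proof. intros [H1 H2]; unfold in_interior, center; simpl; repeat split; lra. Qed.

Lemma same_rect w P Q : Wvalid g w -> notinZ w -> in_interior (f w) P -> in_interior (f w) Q ->
  ev (parP P - parP Q).
Proof.
  intros Hw Hn [[P1 P2] [P3 P4]] [[Q1 Q2] [Q3 Q4]]. unfold parP.
  apply Lpath.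
  - intros h Hh. apply (int_Zfree w); auto. unfold in_interior; simpl.
    destruct Hh; repeat split; lra.
  - intros x Hx. apply (int_Zfree w); auto. unfold in_interior; simpl.
    destruct Hx; repeat split; lra.
Qed.

Lemma adj_par_lr u v : Wvalid g u -> Wvalid g v -> notinZ u -> notinZ v -> u <> v ->
  xr (f u) = xl (f v) -> yl (f u) < yr (f v) -> yl (f v) < yr (f u) ->
  ev (parP (center (f u)) - parP (center (f v))).
Proof.
  intros Hu Hv Nu Nv Huv Hb Ho1 Ho2.
  destruct (Hprop u Hu) as [U1 U2]. destruct (Hprop v Hv) as [V1 V2].
  set (ys := (Rmax (yl (f u)) (yl (f v)) + Rmin (yr (f u)) (yr (f v))) / 2).
  assert (Hys : yl (f u) < ys < yr (f u) /\ yl (f v) < ys < yr (f v)).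
  { unfold ys, Rmax, Rmin.
    destruct (Rle_dec (yl (f u)) (yl (f v))), (Rle_dec (yr (f u)) (yr (f v))); lra. }
  set (cu := center (f u)). set (cv := center (f v)).
  assert (E : ev (parP cu - parP (fst cv, ys))).
  { unfold parP, cu, cv, center; simpl. apply Lpath.
    - intros h Hh. apply (int_Zfree u); auto. unfold in_interior; simpl.
      destruct Hh; repeat split; lra.
    - intros x Hx.
      destruct (Rlt_dec x (xr (f u))).
      + apply (int_Zfree u); auto. unfold in_interior; simpl. destruct Hx; repeat split; lra.
      + destruct (Rlt_dec (xl (f v)) x).
        * apply (int_Zfree v); auto. unfold in_interior; simpl. destruct Hx; repeat split; lra.
        * assert (x = xr (f u)) by lra. subst x.
          intros j Hj Hin.
          apply (triple g f Hprop Hadj Hseg u v (z j) (xr (f u), ys)); auto.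
          apply Hzv; lia. intro E; apply (Nv j Hj); auto. intro E; apply (Nu j Hj); auto.
          unfold in_rect; simpl; repeat split; lra.
          unfold in_rect; simpl; repeat split; lra. }
  assert (E2 : ev (parP (fst cv, ys) - parP cv)).
  { apply (same_rect v); auto. unfold cv, center, in_interior; simpl; repeat split; lra.
    apply center_int; split; auto. }
  eapply ev_eq; [|apply (ev_add _ _ E E2)]. ring.
Qed.

Lemma adj_par u v : Wvalid g u -> Wvalid g v -> notinZ u -> notinZ v -> u <> v -> Wadj g u v ->
  ev (parP (center (f u)) - parP (center (f v))).
Proof.
  intros Hu Hv Nu Nv Huv Ha.
  destruct (contact_of g f Hprop Hadj Hseg u v Hu Hv Huv Ha) as [[Hb|Hb] [Ho1 Ho2]].
  - apply adj_par_lr; auto.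
  - eapply ev_eq; [|apply ev_opp, (adj_par_lr v u); auto]. ring.
Qed.

Lemma path_par (pi : nat -> Wvert) n :
  (forall t, (t <= n)%nat -> Wvalid g (pi t) /\ notinZ (pi t)) ->
  (forall t, (t < n)%nat -> pi t <> pi (S t) /\ Wadj g (pi t) (pi (S t))) ->
  ev (parP (center (f (pi O))) - parP (center (f (pi n)))).
Proof.
  induction n; intros H1 H2.
  - replace (_ - _)%Z with 0%Z by ring. apply ev_0.
  - assert (IH := IHn (fun t Ht => H1 t ltac:(lia)) (fun t Ht => H2 t ltac:(lia))).
    destruct (H1 n ltac:(lia)), (H1 (S n) ltac:(lia)), (H2 n ltac:(lia)).
    assert (E := adj_par (pi n) (pi (S n))); auto.
    eapply ev_eq; [|apply (ev_add _ _ IH (E H H3 H0 H4 H5 H6))]. ring.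
Qed.


Definition inbox (a1 a2 b1 b2 : R) (P : R * R) : Prop :=
  a1 <= fst P <= a2 /\ b1 <= snd P <= b2.

Lemma inbox_mono a1 a2 b1 b2 e e' P : e <= e' ->
  inbox (a1 - e) (a2 + e) (b1 - e) (b2 + e) P -> inbox (a1 - e') (a2 + e') (b1 - e') (b2 + e') P.
Proof. unfold inbox; intros; lra. Qed.

Lemma sep1 r a1 a2 b1 b2 : xl r <= xr r -> yl r <= yr r -> a1 <= a2 -> b1 <= b2 ->
  (forall P, inbox a1 a2 b1 b2 P -> ~ in_rect r P) ->
  exists e, 0 < e /\ forall P, inbox (a1 - e) (a2 + e) (b1 - e) (b2 + e) P -> ~ in_rect r P.
Proof.
  intros H1 H2 H3 H4 H.
  destruct (Rlt_dec (xr r) a1).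
  { exists ((a1 - xr r)/2); split; [lra|]. intros P HP HR. unfold inbox, in_rect in *; lra. }
  destruct (Rlt_dec a2 (xl r)).
  { exists ((xl r - a2)/2); split; [lra|]. intros P HP HR. unfold inbox, in_rect in *; lra. }
  destruct (Rlt_dec (yr r) b1).
  { exists ((b1 - yr r)/2); split; [lra|]. intros P HP HR. unfold inbox, in_rect in *; lra. }
  destruct (Rlt_dec b2 (yl r)).
  { exists ((yl r - b2)/2); split; [lra|]. intros P HP HR. unfold inbox, in_rect in *; lra. }
  exfalso. apply (H (Rmax a1 (xl r), Rmax b1 (yl r))); unfold inbox, in_rect; simpl;
  unfold Rmax; destruct (Rle_dec a1 (xl r)); destruct (Rle_dec b1 (yl r)); repeat split; lra.
Qed.

Lemma sepN c a1 a2 b1 b2 : a1 <= a2 -> b1 <= b2 ->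
  (forall j, (j < k)%nat -> z j <> c -> forall P, inbox a1 a2 b1 b2 P -> ~ in_rect (f (z j)) P) ->
  exists e, 0 < e /\ forall j, (j < k)%nat -> z j <> c ->
    forall P, inbox (a1 - e) (a2 + e) (b1 - e) (b2 + e) P -> ~ in_rect (f (z j)) P.
Proof.
  intros Ha Hb H.
  assert (G : forall n, (n <= k)%nat -> exists e, 0 < e /\ forall j, (j < n)%nat -> z j <> c ->
    forall P, inbox (a1 - e) (a2 + e) (b1 - e) (b2 + e) P -> ~ in_rect (f (z j)) P).
  { induction n; intros Hn.
    - exists 1; split; [lra|]. intros; lia.
    - destruct (IHn ltac:(lia)) as [e1 [He1 G1]].
      destruct (Wvert_eq_dec (z n) c) as [Ec|Nc].
      + exists e1; split; auto. intros j Hj Hjc. destruct (Nat.eq_dec j n).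
        * subst; contradiction.
        * apply G1; auto; lia.
      + destruct (Hprop (z n) (Hzv n ltac:(lia))) as [Q1 Q2].
        destruct (sep1 (f (z n)) a1 a2 b1 b2 ltac:(lra) ltac:(lra) Ha Hb (H n ltac:(lia) Nc))
          as [e2 [He2 G2]].
        exists (Rmin e1 e2); split. apply Rmin_glb_lt; auto.
        intros j Hj Hjc P HP. destruct (Nat.eq_dec j n).
        * subst. apply G2. eapply inbox_mono; [apply Rmin_r|exact HP].
        * apply G1; auto; [lia|]. eapply inbox_mono; [apply Rmin_l|exact HP]. }
  apply G; lia.
Qed.

Lemma LftV_idx j : (j < k)%nat -> exists i, (i < k)%nat /\ LftV j = z i.
Proof.
  intros Hj. destruct (LftV_in j) as [E|E].
  - exists j; auto.
  - destruct (Nat.eq_dec (S j) k).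
    + exists O; split; [lia|]. rewrite E, e, Hzk; auto.
    + exists (S j); split; [lia|auto].
Qed.

Definition cnt (c : Wvert) : Z := sumZ k (fun j => if Wvert_eq_dec (LftV j) c then 1%Z else 0%Z).

Lemma column c : Wvalid g c ->
  exists d0, 0 < d0 /\ forall d, 0 < d <= d0 ->
    (par ((xl (f c) + xr (f c))/2) (yl (f c) - d) - par ((xl (f c) + xr (f c))/2) (yr (f c) + d))%Z = cnt c.
Proof.
  intros Hc. set (C := f c). set (x0 := (xl C + xr C)/2).
  destruct (Hprop c Hc) as [C1 C2]. fold C in C1, C2.
  destruct (sepN c x0 x0 (yl C) (yr C) ltac:(lra) ltac:(lra)) as [e [He G]].
  { intros j Hj Hne P [[P1 P2] [P3 P4]] HP.
    assert (Hin : in_rect C P). { unfold in_rect. unfold x0 in P1, P2. repeat split; lra. }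
    assert (Hzj := Hzv j ltac:(lia)).
    assert (Ha : Wadj g (z j) c) by (apply (Hadj (z j) c Hzj Hc Hne); exists P; auto).
    destruct (contact_of g f Hprop Hadj Hseg (z j) c Hzj Hc Hne Ha) as [[Hb|Hb] _];
    unfold in_rect in HP; fold C in Hb; unfold x0 in *; lra. }
  exists e; split; auto. intros d Hd.
  unfold par, cnt. rewrite <- sumZ_sub. apply sumZ_ext. intros j Hj.
  destruct (Wvert_eq_dec (LftV j) c) as [E|E].
  - rewrite E. fold C. unfold A, act, Uy. unfold x0.
    destruct (Rle_dec (xl C) ((xl C + xr C) / 2)); [|lra].
    destruct (Rlt_dec ((xl C + xr C) / 2) (xr C)); [|lra].
    destruct (Rlt_dec (yl C - d) (yl C)); [|lra].
    destruct (Rlt_dec (yr C + d) (yl C)); [lra|]. ring.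
  - destruct (LftV_idx j Hj) as [i [Hi Ei]]. rewrite Ei in *.
    assert (Hzi := Hzv i ltac:(lia)). destruct (Hprop _ Hzi) as [Q1 Q2].
    unfold A, act, Uy.
    destruct (Rle_dec (xl (f (z i))) x0); [|ring].
    destruct (Rlt_dec x0 (xr (f (z i)))); [|ring].
    destruct (Rlt_dec (yl C - d) (yl (f (z i)))); destruct (Rlt_dec (yr C + d) (yl (f (z i))));
      try ring; [|lra].
    exfalso. apply (G i Hi E (x0, yl (f (z i)))).
    + unfold inbox; simpl; repeat split; lra.
    + unfold in_rect; simpl; repeat split; lra.
Qed.

Section Corner.
Variable w c : Wvert.
Hypothesis Hw : Wvalid g w.
Hypothesis Nw : notinZ w.
Hypothesis Hc : Wvalid g c.
Variable ys : R.
Let C := f c.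
Let W := f w.
Let x0 := (xl C + xr C) / 2.
Hypothesis Hys : yl W < ys < yr W /\ yl C < ys < yr C.

Lemma corner_TL : xr W = xl C ->
  (forall j, (j < k)%nat -> z j <> c -> forall P,
     inbox (xl C) (xl C) ys (yr C) P \/ inbox (xl C) x0 (yr C) (yr C) P -> ~ in_rect (f (z j)) P) ->
  exists d0, 0 < d0 /\ forall d, 0 < d <= d0 -> ev (parP (center W) - par x0 (yr C + d)).
Proof.
  intros Hb Hpos. destruct (Hprop c Hc) as [C1 C2]. destruct (Hprop w Hw) as [W1 W2].
  fold C in C1, C2. fold W in W1, W2.
  destruct (sepN c (xl C) (xl C) ys (yr C) ltac:(lra) ltac:(lra)) as [e1 [He1 G1]].
  { intros; apply Hpos; auto. }
  destruct (sepN c (xl C) x0 (yr C) (yr C) ltac:(unfold x0; lra) ltac:(lra)) as [e2 [He2 G2]].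
  { intros; apply Hpos; auto. }
  set (e := Rmin e1 e2).
  assert (He : 0 < e /\ e <= e1 /\ e <= e2) by
    (unfold e; split; [apply Rmin_glb_lt; auto|split; [apply Rmin_l|apply Rmin_r]]).
  set (t := Rmin e ((xr W - xl W) / 2)).
  assert (Ht : 0 < t /\ t <= e /\ t <= (xr W - xl W)/2) by
    (unfold t; split; [apply Rmin_glb_lt; lra|split; [apply Rmin_l|apply Rmin_r]]).
  exists e; split; [lra|]. intros d Hd.
  assert (E1 : ev (parP (center W) - parP (xl C - t, ys))).
  { apply (same_rect w); auto. apply center_int; split; auto.
    fold W; unfold in_interior; simpl; repeat split; lra. }
  assert (E2 : ev (par (xl C - t) ys - par x0 (yr C + d))).
  { apply Lpath.
    - intros h Hh j Hj. destruct (Wvert_eq_dec (z j) c) as [Ec|Nc].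
      + rewrite Ec; fold C; unfold in_rect; simpl; lra.
      + apply (G1 j Hj Nc). unfold inbox; simpl; destruct Hh; repeat split; lra.
    - intros x Hx j Hj. destruct (Wvert_eq_dec (z j) c) as [Ec|Nc].
      + rewrite Ec; fold C; unfold in_rect; simpl; lra.
      + apply (G2 j Hj Nc). unfold inbox, x0 in *; simpl; destruct Hx; repeat split; lra. }
  unfold parP at 2 in E1; simpl in E1.
  eapply ev_eq; [|apply (ev_add _ _ E1 E2)]. ring.
Qed.

Lemma corner_TR : xl W = xr C ->
  (forall j, (j < k)%nat -> z j <> c -> forall P,
     inbox (xr C) (xr C) ys (yr C) P \/ inbox x0 (xr C) (yr C) (yr C) P -> ~ in_rect (f (z j)) P) ->
  exists d0, 0 < d0 /\ forall d, 0 < d <= d0 -> ev (parP (center W) - par x0 (yr C + d)).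
Proof.
  intros Hb Hpos. destruct (Hprop c Hc) as [C1 C2]. destruct (Hprop w Hw) as [W1 W2].
  fold C in C1, C2. fold W in W1, W2.
  destruct (sepN c (xr C) (xr C) ys (yr C) ltac:(lra) ltac:(lra)) as [e1 [He1 G1]].
  { intros; apply Hpos; auto. }
  destruct (sepN c x0 (xr C) (yr C) (yr C) ltac:(unfold x0; lra) ltac:(lra)) as [e2 [He2 G2]].
  { intros; apply Hpos; auto. }
  set (e := Rmin e1 e2).
  assert (He : 0 < e /\ e <= e1 /\ e <= e2) by
    (unfold e; split; [apply Rmin_glb_lt; auto|split; [apply Rmin_l|apply Rmin_r]]).
  set (t := Rmin e ((xr W - xl W) / 2)).
  assert (Ht : 0 < t /\ t <= e /\ t <= (xr W - xl W)/2) by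
    (unfold t; split; [apply Rmin_glb_lt; lra|split; [apply Rmin_l|apply Rmin_r]]).
  exists e; split; [lra|]. intros d Hd.
  assert (E1 : ev (parP (center W) - parP (xr C + t, ys))).
  { apply (same_rect w); auto. apply center_int; split; auto.
    fold W; unfold in_interior; simpl; repeat split; lra. }
  assert (E2 : ev (par (xr C + t) ys - par x0 (yr C + d))).
  { apply Lpath.
    - intros h Hh j Hj. destruct (Wvert_eq_dec (z j) c) as [Ec|Nc].
      + rewrite Ec; fold C; unfold in_rect; simpl; lra.
      + apply (G1 j Hj Nc). unfold inbox; simpl; destruct Hh; repeat split; lra.
    - intros x Hx j Hj. destruct (Wvert_eq_dec (z j) c) as [Ec|Nc].
      + rewrite Ec; fold C; unfold in_rect; simpl; lra.
      + apply (G2 j Hj Nc). unfold inbox, x0 in *; simpl; destruct Hx; repeat split; lra. }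
  unfold parP at 2 in E1; simpl in E1.
  eapply ev_eq; [|apply (ev_add _ _ E1 E2)]. ring.
Qed.

Lemma corner_BL : xr W = xl C ->
  (forall j, (j < k)%nat -> z j <> c -> forall P,
     inbox (xl C) (xl C) (yl C) ys P \/ inbox (xl C) x0 (yl C) (yl C) P -> ~ in_rect (f (z j)) P) ->
  exists d0, 0 < d0 /\ forall d, 0 < d <= d0 -> ev (parP (center W) - par x0 (yl C - d)).
Proof.
  intros Hb Hpos. destruct (Hprop c Hc) as [C1 C2]. destruct (Hprop w Hw) as [W1 W2].
  fold C in C1, C2. fold W in W1, W2.
  destruct (sepN c (xl C) (xl C) (yl C) ys ltac:(lra) ltac:(lra)) as [e1 [He1 G1]].
  { intros; apply Hpos; auto. }
  destruct (sepN c (xl C) x0 (yl C) (yl C) ltac:(unfold x0; lra) ltac:(lra)) as [e2 [He2 G2]].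
  { intros; apply Hpos; auto. }
  set (e := Rmin e1 e2).
  assert (He : 0 < e /\ e <= e1 /\ e <= e2) by
    (unfold e; split; [apply Rmin_glb_lt; auto|split; [apply Rmin_l|apply Rmin_r]]).
  set (t := Rmin e ((xr W - xl W) / 2)).
  assert (Ht : 0 < t /\ t <= e /\ t <= (xr W - xl W)/2) by
    (unfold t; split; [apply Rmin_glb_lt; lra|split; [apply Rmin_l|apply Rmin_r]]).
  exists e; split; [lra|]. intros d Hd.
  assert (E1 : ev (parP (center W) - parP (xl C - t, ys))).
  { apply (same_rect w); auto. apply center_int; split; auto.
    fold W; unfold in_interior; simpl; repeat split; lra. }
  assert (E2 : ev (par (xl C - t) ys - par x0 (yl C - d))).
  { apply Lpath.
    - intros h Hh j Hj. destruct (Wvert_eq_dec (z j) c) as [Ec|Nc].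
      + rewrite Ec; fold C; unfold in_rect; simpl; lra.
      + apply (G1 j Hj Nc). unfold inbox; simpl; destruct Hh; repeat split; lra.
    - intros x Hx j Hj. destruct (Wvert_eq_dec (z j) c) as [Ec|Nc].
      + rewrite Ec; fold C; unfold in_rect; simpl; lra.
      + apply (G2 j Hj Nc). unfold inbox, x0 in *; simpl; destruct Hx; repeat split; lra. }
  unfold parP at 2 in E1; simpl in E1.
  eapply ev_eq; [|apply (ev_add _ _ E1 E2)]. ring.
Qed.

Lemma corner_BR : xl W = xr C ->
  (forall j, (j < k)%nat -> z j <> c -> forall P,
     inbox (xr C) (xr C) (yl C) ys P \/ inbox x0 (xr C) (yl C) (yl C) P -> ~ in_rect (f (z j)) P) ->
  exists d0, 0 < d0 /\ forall d, 0 < d <= d0 -> ev (parP (center W) - par x0 (yl C - d)).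
Proof.
  intros Hb Hpos. destruct (Hprop c Hc) as [C1 C2]. destruct (Hprop w Hw) as [W1 W2].
  fold C in C1, C2. fold W in W1, W2.
  destruct (sepN c (xr C) (xr C) (yl C) ys ltac:(lra) ltac:(lra)) as [e1 [He1 G1]].
  { intros; apply Hpos; auto. }
  destruct (sepN c x0 (xr C) (yl C) (yl C) ltac:(unfold x0; lra) ltac:(lra)) as [e2 [He2 G2]].
  { intros; apply Hpos; auto. }
  set (e := Rmin e1 e2).
  assert (He : 0 < e /\ e <= e1 /\ e <= e2) by
    (unfold e; split; [apply Rmin_glb_lt; auto|split; [apply Rmin_l|apply Rmin_r]]).
  set (t := Rmin e ((xr W - xl W) / 2)).
  assert (Ht : 0 < t /\ t <= e /\ t <= (xr W - xl W)/2) by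
    (unfold t; split; [apply Rmin_glb_lt; lra|split; [apply Rmin_l|apply Rmin_r]]).
  exists e; split; [lra|]. intros d Hd.
  assert (E1 : ev (parP (center W) - parP (xr C + t, ys))).
  { apply (same_rect w); auto. apply center_int; split; auto.
    fold W; unfold in_interior; simpl; repeat split; lra. }
  assert (E2 : ev (par (xr C + t) ys - par x0 (yl C - d))).
  { apply Lpath.
    - intros h Hh j Hj. destruct (Wvert_eq_dec (z j) c) as [Ec|Nc].
      + rewrite Ec; fold C; unfold in_rect; simpl; lra.
      + apply (G1 j Hj Nc). unfold inbox; simpl; destruct Hh; repeat split; lra.
    - intros x Hx j Hj. destruct (Wvert_eq_dec (z j) c) as [Ec|Nc].
      + rewrite Ec; fold C; unfold in_rect; simpl; lra.
      + apply (G2 j Hj Nc). unfold inbox, x0 in *; simpl; destruct Hx; repeat split; lra. }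
  unfold parP at 2 in E1; simpl in E1.
  eapply ev_eq; [|apply (ev_add _ _ E1 E2)]. ring.
Qed.

End Corner.

End Par.

Section Graph.
Variable g : nat.
Hypothesis hg : (3 <= g)%nat.
Local Notation m := (g / 2)%nat.
Local Opaque Nat.div.

Lemma m_pos : (1 <= m)%nat.
Proof. apply Nat.div_le_lower_bound; lia. Qed.

Definition Zf (h : bool) (i d : nat) (j : nat) : Wvert :=
  if (j =? 0)%nat then Hub h
  else if (j <=? m)%nat then Sub h i (j - 1)
  else if (j =? m + 1)%nat then Cyc i
  else if (j =? m + 2)%nat then Cyc d
  else if (j <=? 2 * m + 2)%nat then Sub h d (2 * m + 2 - j)
  else Hub h.

Definition pif (h : bool) (i e : nat) (t : nat) : Wvert :=
  if (t <? m)%nat then Sub h i (m - 1 - t)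
  else if (t =? m)%nat then Hub h
  else if (t <=? 2 * m)%nat then Sub h e (t - m - 1)
  else Cyc e.

Lemma Sub_k a b c a' b' c' : Sub a b c = Sub a' b' c' -> c = c'.
Proof. intro E; injection E; auto. Qed.
Lemma Cyc_k a a' : Cyc a = Cyc a' -> a = a'.
Proof. intro E; injection E; auto. Qed.

Ltac dcmp := repeat match goal with
  | |- context [(?a =? ?b)%nat] => destruct (Nat.eqb_spec a b)
  | |- context [(?a <=? ?b)%nat] => destruct (Nat.leb_spec a b)
  | |- context [(?a <? ?b)%nat] => destruct (Nat.ltb_spec a b)
  end.

Lemma Zf_shape h i d j : Zf h i d j = Hub h \/ (exists t, Zf h i d j = Sub h i t) \/
  (exists t, Zf h i d j = Sub h d t) \/ Zf h i d j = Cyc i \/ Zf h i d j = Cyc d.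
Proof. unfold Zf; dcmp; eauto 6. Qed.

Lemma pif_shape h i e t : (exists s, pif h i e t = Sub h i s) \/ pif h i e t = Hub h \/
  (exists s, pif h i e t = Sub h e s) \/ pif h i e t = Cyc e.
Proof. unfold pif; dcmp; eauto 6. Qed.

Lemma Zf_k h i d : Zf h i d (2 * m + 3) = Zf h i d 0.
Proof. unfold Zf; dcmp; auto; lia. Qed.

Lemma Zf_valid h i d j : (i < g)%nat -> (d < g)%nat -> Wvalid g (Zf h i d j).
Proof.
  intros Hi Hd. assert (M := m_pos). unfold Zf; dcmp; cbn -[Nat.div Nat.sub Nat.add Nat.mul]; auto; split; auto; lia.
Qed.

Lemma Zf_edge h i d j : (i < g)%nat -> (d < g)%nat -> d <> i -> Wadj g (Cyc i) (Cyc d) ->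
  (j < 2 * m + 3)%nat -> Zf h i d j <> Zf h i d (S j) /\ Wadj g (Zf h i d j) (Zf h i d (S j)).
Proof.
  intros Hi Hd Hdi Ha Hj. assert (M := m_pos). unfold Zf; dcmp; try lia;
  (split; [intro E; try discriminate; try (apply Sub_k in E; lia); try (apply Cyc_k in E; lia)|]).
  all: unfold Wadj; cbn -[Nat.div Nat.sub Nat.add Nat.mul].
  all: try (left; repeat split; try reflexivity; lia).
  all: try (right; repeat split; try reflexivity; lia).
  all: try (left; split; auto; lia).
  all: try (right; split; auto; lia).
  all: auto.
Qed.

Lemma Zf_c h i d : Zf h i d (S m) = Cyc i.
Proof. unfold Zf; dcmp; auto; lia. Qed.

Lemma Zf_cnot h i d j : d <> i -> Zf h i d j = Cyc i -> j = S m \/ (2 * m + 2 < j)%nat.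
Proof. intros Hdi. unfold Zf; dcmp; intro E; try discriminate; try lia; inversion E; lia. Qed.

Lemma Zf_m h i d : Zf h i d m = Sub h i (m - 1).
Proof. assert (M := m_pos). unfold Zf; dcmp; auto; lia. Qed.

Lemma Zf_m2 h i d : Zf h i d (S (S m)) = Cyc d.
Proof. unfold Zf; dcmp; auto; lia. Qed.

Lemma Zf_adjc h i d j : d <> i -> Zf h i d j <> Cyc i -> Wadj g (Zf h i d j) (Cyc i) ->
  Zf h i d j = Sub h i (m - 1) \/ Zf h i d j = Cyc d.
Proof.
  intros Hdi Hne Ha. destruct (Zf_shape h i d j) as [E|[[t E]|[[t E]|[E|E]]]]; rewrite E in *;
  unfold Wadj in Ha; cbn -[Nat.div Nat.sub Nat.add Nat.mul] in Ha; auto.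
  - destruct Ha as [[]|[]].
  - destruct Ha as [[_ Ht]|[]]. subst. auto.
  - destruct Ha as [[Ht _]|[]]. lia.
  - contradiction.
Qed.

Lemma pif_valid h i e t : (i < g)%nat -> (e < g)%nat -> Wvalid g (pif h i e t).
Proof. intros Hi He. assert (M := m_pos). unfold pif; dcmp; cbn -[Nat.div Nat.sub Nat.add Nat.mul]; auto; split; auto; lia. Qed.

Lemma pif_edge h i e t : (i < g)%nat -> (e < g)%nat -> (t < 2 * m + 1)%nat ->
  pif h i e t <> pif h i e (S t) /\ Wadj g (pif h i e t) (pif h i e (S t)).
Proof.
  intros Hi He Ht. assert (M := m_pos). unfold pif; dcmp; try lia;
  (split; [intro E; try discriminate; try (apply Sub_k in E; lia); try (apply Cyc_k in E; lia)|]). all: try (unfold Wadj; cbn -[Nat.div Nat.sub Nat.add Nat.mul]).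
  all: try (left; repeat split; try reflexivity; lia).
  all: try (right; repeat split; try reflexivity; lia).
Qed.

Lemma pif_0 h i e : pif h i e 0 = Sub h i (m - 1).
Proof. assert (M := m_pos). unfold pif; dcmp; try lia. f_equal; lia. Qed.

Lemma pif_n h i e : pif h i e (2 * m + 1) = Cyc e.
Proof. unfold pif; dcmp; auto; lia. Qed.

Lemma pif_notin h i d e t j : e <> i -> e <> d -> Zf (negb h) i d j <> pif h i e t.
Proof.
  intros H1 H2 E. destruct (Zf_shape (negb h) i d j) as [E'|[[s E']|[[s E']|[E'|E']]]];
  destruct (pif_shape h i e t) as [[s' F]|[F|[[s' F]|F]]];
  rewrite E', F in E; try discriminate; try (apply Cyc_k in E; lia);
  injection E; intros; destruct h; discriminate.
Qed.

End Graph.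

Section Final.
Variable g : nat.
Hypothesis hg : (3 <= g)%nat.
Variable f : Wvert -> rect.
Hypothesis Hprop : forall v, Wvalid g v -> proper_rect (f v).
Hypothesis Hint : forall u v, Wvalid g u -> Wvalid g v -> u <> v ->
       ~ (exists p, in_interior (f u) p /\ in_interior (f v) p).
Hypothesis Hadj : forall u v, Wvalid g u -> Wvalid g v -> u <> v ->
       (Wadj g u v <-> exists p, in_rect (f u) p /\ in_rect (f v) p).
Hypothesis Hseg : forall u v, Wvalid g u -> Wvalid g v -> u <> v ->
       (exists p, in_rect (f u) p /\ in_rect (f v) p) ->
       meet_in_vertical_segment (f u) (f v).
Local Notation m := (g / 2)%nat.
Local Notation K := (2 * (g / 2) + 3)%nat.
Local Opaque Nat.div.

Lemma Zf_CW h i d : (i < g)%nat -> (d < g)%nat -> d <> i -> Wadj g (Cyc i) (Cyc d) ->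
  Zf g h i d K = Zf g h i d 0 /\ (forall j, (j <= K)%nat -> Wvalid g (Zf g h i d j)) /\
  (forall j, (j < K)%nat -> Zf g h i d j <> Zf g h i d (S j) /\ Wadj g (Zf g h i d j) (Zf g h i d (S j))).
Proof.
  intros. split; [apply (Zf_k g hg)|split]; intros; [apply (Zf_valid g hg); auto|apply (Zf_edge g hg); auto].
Qed.

Lemma Zf_not_sub h i d j a b : Zf g h i d j <> Sub (negb h) a b.
Proof.
  destruct (Zf_shape g h i d j) as [E|[[t E]|[[t E]|[E|E]]]]; rewrite E; try discriminate;
  intro F; injection F; intros; destruct h; discriminate.
Qed.

Lemma Zf_not_cyc h i d j e : e <> i -> e <> d -> Zf g h i d j <> Cyc e.
Proof.
  intros H1 H2. destruct (Zf_shape g h i d j) as [E|[[t E]|[[t E]|[E|E]]]]; rewrite E; try discriminate;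
  intro F; apply Cyc_k in F; lia.
Qed.

Lemma Wadj_sub_c h i : Wadj g (Sub h i (m - 1)) (Cyc i).
Proof. unfold Wadj; left; cbn -[Nat.div Nat.sub]; auto. Qed.

Lemma ys_ex (W C : rect) : yl W < yr C -> yl C < yr W -> yl W < yr W -> yl C < yr C ->
  exists ys, yl W < ys < yr W /\ yl C < ys < yr C.
Proof.
  intros. exists ((Rmax (yl W) (yl C) + Rmin (yr W) (yr C))/2).
  unfold Rmax, Rmin; destruct (Rle_dec (yl W) (yl C)), (Rle_dec (yr W) (yr C)); split; split; lra.
Qed.

Lemma cnt_one h i d : (i < g)%nat -> (d < g)%nat -> d <> i -> Wadj g (Cyc i) (Cyc d) ->
  (xl (f (Sub h i (m - 1))) = xr (f (Cyc i)) /\ xr (f (Cyc d)) = xl (f (Cyc i))) \/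
  (xr (f (Sub h i (m - 1))) = xl (f (Cyc i)) /\ xl (f (Cyc d)) = xr (f (Cyc i))) ->
  cnt f K (Zf g h i d) (Cyc i) = 1%Z.
Proof.
  intros Hi Hd Hdi Ha Hpos. assert (M := m_pos g hg).
  assert (Vs : Wvalid g (Sub h i (m - 1))) by (cbn -[Nat.div Nat.sub]; split; auto; lia).
  destruct (Hprop _ Vs) as [S1 S2].
  destruct (Hprop (Cyc i) Hi) as [C1 C2]. destruct (Hprop (Cyc d) Hd) as [D1 D2].
  unfold cnt. rewrite (sumZ_two _ _ m); [| lia |].
  - unfold LftV. rewrite (Zf_c g hg), (Zf_m g hg), (Zf_m2 g hg).
    destruct (Req_EM_T (xr (f (Sub h i (m - 1)))) (xl (f (Cyc i))));
    destruct (Req_EM_T (xr (f (Cyc i))) (xl (f (Cyc d))));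
    destruct (Wvert_eq_dec (Sub h i (m - 1)) (Cyc i)); try discriminate;
    destruct (Wvert_eq_dec (Cyc i) (Cyc i)); try congruence;
    destruct (Wvert_eq_dec (Cyc d) (Cyc i)) as [E|]; try (apply Cyc_k in E; lia);
    try reflexivity; exfalso; lra.
  - intros j Hj H1 H2. destruct (Wvert_eq_dec (LftV f (Zf g h i d) j) (Cyc i)) as [E|]; auto.
    exfalso. destruct (LftV_in f (Zf g h i d) j) as [F|F]; rewrite F in E.
    + destruct (Zf_cnot g hg h i d j Hdi E); lia.
    + destruct (Nat.eq_dec (S j) K) as [G|G].
      * rewrite G, (Zf_k g hg) in E. unfold Zf in E. simpl in E. discriminate.
      * destruct (Zf_cnot g hg h i d (S j) Hdi E); lia.
Qed.

Lemma final_contra h i d e : (i < g)%nat -> (d < g)%nat -> (e < g)%nat -> d <> i -> e <> i -> e <> d ->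
  Wadj g (Cyc i) (Cyc d) ->
  (exists d0, 0 < d0 /\ forall t, 0 < t <= d0 ->
     ev (parP f K (Zf g h i d) (center (f (Sub (negb h) i (m - 1)))) -
         par f K (Zf g h i d) ((xl (f (Cyc i)) + xr (f (Cyc i)))/2) (yr (f (Cyc i)) + t))) ->
  (exists d0, 0 < d0 /\ forall t, 0 < t <= d0 ->
     ev (parP f K (Zf g h i d) (center (f (Cyc e))) -
         par f K (Zf g h i d) ((xl (f (Cyc i)) + xr (f (Cyc i)))/2) (yl (f (Cyc i)) - t))) ->
  cnt f K (Zf g h i d) (Cyc i) = 1%Z -> False.
Proof.
  intros Hi Hd He Hdi Hei Hed Ha [t1 [T1 HT]] [t2 [T2 HB]] Hc.
  assert (M := m_pos g hg).
  destruct (Zf_CW h i d Hi Hd Hdi Ha) as [Zk [Zv Ze]].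
  destruct (column g f Hprop Hadj Hseg K (Zf g h i d) Zk Zv (Cyc i) Hi) as [t3 [T3 HC]].
  set (t := Rmin t1 (Rmin t2 t3)).
  assert (Ht : 0 < t /\ t <= t1 /\ t <= t2 /\ t <= t3).
  { unfold t. repeat split.
    - repeat apply Rmin_glb_lt; auto.
    - apply Rmin_l.
    - eapply Rle_trans; [apply Rmin_r|apply Rmin_l].
    - eapply Rle_trans; [apply Rmin_r|apply Rmin_r]. }
  assert (E1 := HT t ltac:(lra)). assert (E2 := HB t ltac:(lra)).
  assert (E3 := HC t ltac:(lra)). rewrite Hc in E3.
  assert (E4 := path_par g f Hprop Hint Hadj Hseg K (Zf g h i d) Zk Zv Ze (pif g (negb h) i e) (2 * m + 1)).
  rewrite (pif_0 g hg), (pif_n g hg) in E4.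
  assert (E5 : ev (parP f K (Zf g h i d) (center (f (Sub (negb h) i (m - 1)))) -
                   parP f K (Zf g h i d) (center (f (Cyc e))))).
  { apply E4.
    - intros s Hs. split. apply (pif_valid g hg); auto.
      intros j Hj. assert (N := pif_notin g hg (negb h) i d e s j Hei Hed).
      rewrite negb_involutive in N. exact N.
    - intros s Hs. apply (pif_edge g hg); auto; lia. }
  apply not_ev_1.
  eapply ev_eq; [|apply (ev_sub _ _ (ev_sub _ _ E1 E2) E5)].
  rewrite <- E3. ring.
Qed.

Lemma Hpos_gen h i d (Kp : R * R -> Prop) : (i < g)%nat -> (d < g)%nat -> d <> i ->
  (forall P, Kp P -> in_rect (f (Cyc i)) P) ->
  (forall P, Kp P -> ~ in_rect (f (Sub h i (m - 1))) P) ->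
  (forall P, Kp P -> ~ in_rect (f (Cyc d)) P) ->
  forall j, (j < K)%nat -> Zf g h i d j <> Cyc i -> forall P, Kp P -> ~ in_rect (f (Zf g h i d j)) P.
Proof.
  intros Hi Hd Hdi H1 H2 H3 j Hj Hne P HP HR.
  assert (Hv : Wvalid g (Zf g h i d j)) by (apply (Zf_valid g hg); auto).
  assert (Ha : Wadj g (Zf g h i d j) (Cyc i)).
  { apply (Hadj _ (Cyc i) Hv Hi Hne). exists P; auto. }
  destruct (Zf_adjc g hg h i d j Hdi Hne Ha) as [E|E]; rewrite E in HR.
  - apply (H2 P HP HR).
  - apply (H3 P HP HR).
Qed.

End Final.

Section Cases.
Variable g : nat.
Hypothesis hg : (3 <= g)%nat.
Variable f : Wvert -> rect.
Hypothesis Hprop : forall v, Wvalid g v -> proper_rect (f v).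
Hypothesis Hint : forall u v, Wvalid g u -> Wvalid g v -> u <> v ->
       ~ (exists p, in_interior (f u) p /\ in_interior (f v) p).
Hypothesis Hadj : forall u v, Wvalid g u -> Wvalid g v -> u <> v ->
       (Wadj g u v <-> exists p, in_rect (f u) p /\ in_rect (f v) p).
Hypothesis Hseg : forall u v, Wvalid g u -> Wvalid g v -> u <> v ->
       (exists p, in_rect (f u) p /\ in_rect (f v) p) ->
       meet_in_vertical_segment (f u) (f v).
Local Notation m := (g / 2)%nat.
Local Notation K := (2 * (g / 2) + 3)%nat.
Local Opaque Nat.div.

Ltac kp := let P := fresh "P" in let HP := fresh "HP" in
  intros P HP; unfold inbox in HP;
  try (let X1 := fresh in let X2 := fresh in let X3 := fresh in let X4 := fresh in
       intros [[X1 X2] [X3 X4]]);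
  try (unfold in_rect; repeat split);
  destruct HP as [[[? ?] [? ?]]|[[? ?] [? ?]]]; lra.

Lemma Vsub h i : (i < g)%nat -> Wvalid g (Sub h i (m - 1)).
Proof. intros. assert (M := m_pos g hg). cbn -[Nat.div Nat.sub]; split; auto; lia. Qed.

Lemma case1 h i ip iq : (i < g)%nat -> (ip < g)%nat -> (iq < g)%nat -> ip <> i -> iq <> i -> ip <> iq ->
  Wadj g (Cyc ip) (Cyc i) -> Wadj g (Cyc iq) (Cyc i) ->
  xr (f (Cyc ip)) = xl (f (Cyc i)) -> xl (f (Cyc iq)) = xr (f (Cyc i)) ->
  xl (f (Sub h i (m - 1))) = xr (f (Cyc i)) -> yr (f (Cyc iq)) < yl (f (Sub h i (m - 1))) ->
  xr (f (Sub (negb h) i (m - 1))) = xl (f (Cyc i)) -> yr (f (Cyc ip)) < yl (f (Sub (negb h) i (m - 1))) ->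
  False.
Proof.
  intros Hi Hp Hq Hpi Hqi Hpq Ap Aq H1 H2 H3 H4 H5 H6.
  set (w := Sub (negb h) i (m - 1)) in *.
  assert (Vw : Wvalid g w) by (apply Vsub; auto).
  destruct (contact_of g f Hprop Hadj Hseg w (Cyc i) Vw Hi ltac:(discriminate) (Wadj_sub_c g (negb h) i))
    as [_ [O1 O2]].
  destruct (contact_of g f Hprop Hadj Hseg (Cyc iq) (Cyc i) Hq Hi ltac:(intro E; apply Cyc_k in E; lia) Aq)
    as [_ [O3 O4]].
  destruct (Hprop _ Vw) as [W1 W2]. destruct (Hprop (Cyc i) Hi) as [C1 C2].
  destruct (Hprop (Cyc iq) Hq) as [Q1 Q2]. destruct (Hprop (Cyc ip) Hp) as [P1 P2].
  destruct (Hprop _ (Vsub h i Hi)) as [S1 S2].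
  destruct (ys_ex _ _ O1 O2 W2 C2) as [ysw Hysw].
  destruct (ys_ex _ _ O3 O4 Q2 C2) as [ysq Hysq].
  assert (Adi : Wadj g (Cyc i) (Cyc ip)) by (apply Wadj_sym; auto).
  destruct (Zf_CW g hg h i ip Hi Hp Hpi Adi) as [Zk [Zv Ze]].
  apply (final_contra g hg f Hprop Hint Hadj Hseg h i ip iq); auto.
  - apply (corner_TL g f Hprop Hint Hadj Hseg K (Zf g h i ip) Zk Zv Ze w (Cyc i) Vw
      (fun j _ => Zf_not_sub g h i ip j i (m - 1)) Hi ysw Hysw H5).
    apply (Hpos_gen g hg f Hadj h i ip); auto; kp.
  - apply (corner_BR g f Hprop Hint Hadj Hseg K (Zf g h i ip) Zk Zv Ze (Cyc iq) (Cyc i) Hq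
      (fun j _ => Zf_not_cyc g hg h i ip j iq Hqi (not_eq_sym Hpq)) Hi ysq Hysq H2).
    apply (Hpos_gen g hg f Hadj h i ip); auto; kp.
  - apply (cnt_one g hg f Hprop h i ip); auto.
Qed.

Lemma case2 h i ip iq : (i < g)%nat -> (ip < g)%nat -> (iq < g)%nat -> ip <> i -> iq <> i -> ip <> iq ->
  Wadj g (Cyc ip) (Cyc i) -> Wadj g (Cyc iq) (Cyc i) ->
  xr (f (Cyc ip)) = xl (f (Cyc i)) -> xl (f (Cyc iq)) = xr (f (Cyc i)) ->
  xr (f (Sub h i (m - 1))) = xl (f (Cyc i)) -> yr (f (Cyc ip)) < yl (f (Sub h i (m - 1))) ->
  xr (f (Sub (negb h) i (m - 1))) = xl (f (Cyc i)) -> yr (f (Sub h i (m - 1))) < yl (f (Sub (negb h) i (m - 1))) ->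
  False.
Proof.
  intros Hi Hp Hq Hpi Hqi Hpq Ap Aq H1 H2 H3 H4 H5 H6.
  set (w := Sub (negb h) i (m - 1)) in *.
  assert (Vw : Wvalid g w) by (apply Vsub; auto).
  destruct (contact_of g f Hprop Hadj Hseg w (Cyc i) Vw Hi ltac:(discriminate) (Wadj_sub_c g (negb h) i))
    as [_ [O1 O2]].
  destruct (contact_of g f Hprop Hadj Hseg (Cyc ip) (Cyc i) Hp Hi ltac:(intro E; apply Cyc_k in E; lia) Ap)
    as [_ [O3 O4]].
  destruct (Hprop _ Vw) as [W1 W2]. destruct (Hprop (Cyc i) Hi) as [C1 C2].
  destruct (Hprop (Cyc iq) Hq) as [Q1 Q2]. destruct (Hprop (Cyc ip) Hp) as [P1 P2].
  destruct (Hprop _ (Vsub h i Hi)) as [S1 S2].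
  destruct (ys_ex _ _ O1 O2 W2 C2) as [ysw Hysw].
  destruct (ys_ex _ _ O3 O4 P2 C2) as [ysp Hysp].
  assert (Adi : Wadj g (Cyc i) (Cyc iq)) by (apply Wadj_sym; auto).
  destruct (Zf_CW g hg h i iq Hi Hq Hqi Adi) as [Zk [Zv Ze]].
  apply (final_contra g hg f Hprop Hint Hadj Hseg h i iq ip); auto.
  - apply (corner_TL g f Hprop Hint Hadj Hseg K (Zf g h i iq) Zk Zv Ze w (Cyc i) Vw
      (fun j _ => Zf_not_sub g h i iq j i (m - 1)) Hi ysw Hysw H5).
    apply (Hpos_gen g hg f Hadj h i iq); auto; kp.
  - apply (corner_BL g f Hprop Hint Hadj Hseg K (Zf g h i iq) Zk Zv Ze (Cyc ip) (Cyc i) Hp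
      (fun j _ => Zf_not_cyc g hg h i iq j ip Hpi Hpq) Hi ysp Hysp H1).
    apply (Hpos_gen g hg f Hadj h i iq); auto; kp.
  - apply (cnt_one g hg f Hprop h i iq); auto.
Qed.

Lemma case3 h i ip iq : (i < g)%nat -> (ip < g)%nat -> (iq < g)%nat -> ip <> i -> iq <> i -> ip <> iq ->
  Wadj g (Cyc ip) (Cyc i) -> Wadj g (Cyc iq) (Cyc i) ->
  xr (f (Cyc ip)) = xl (f (Cyc i)) -> xl (f (Cyc iq)) = xr (f (Cyc i)) ->
  xl (f (Sub h i (m - 1))) = xr (f (Cyc i)) -> yr (f (Cyc iq)) < yl (f (Sub h i (m - 1))) ->
  xl (f (Sub (negb h) i (m - 1))) = xr (f (Cyc i)) -> yr (f (Sub h i (m - 1))) < yl (f (Sub (negb h) i (m - 1))) ->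
  False.
Proof.
  intros Hi Hp Hq Hpi Hqi Hpq Ap Aq H1 H2 H3 H4 H5 H6.
  set (w := Sub (negb h) i (m - 1)) in *.
  assert (Vw : Wvalid g w) by (apply Vsub; auto).
  destruct (contact_of g f Hprop Hadj Hseg w (Cyc i) Vw Hi ltac:(discriminate) (Wadj_sub_c g (negb h) i))
    as [_ [O1 O2]].
  destruct (contact_of g f Hprop Hadj Hseg (Cyc iq) (Cyc i) Hq Hi ltac:(intro E; apply Cyc_k in E; lia) Aq)
    as [_ [O3 O4]].
  destruct (Hprop _ Vw) as [W1 W2]. destruct (Hprop (Cyc i) Hi) as [C1 C2].
  destruct (Hprop (Cyc iq) Hq) as [Q1 Q2]. destruct (Hprop (Cyc ip) Hp) as [P1 P2].
  destruct (Hprop _ (Vsub h i Hi)) as [S1 S2].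
  destruct (ys_ex _ _ O1 O2 W2 C2) as [ysw Hysw].
  destruct (ys_ex _ _ O3 O4 Q2 C2) as [ysq Hysq].
  assert (Adi : Wadj g (Cyc i) (Cyc ip)) by (apply Wadj_sym; auto).
  destruct (Zf_CW g hg h i ip Hi Hp Hpi Adi) as [Zk [Zv Ze]].
  apply (final_contra g hg f Hprop Hint Hadj Hseg h i ip iq); auto.
  - apply (corner_TR g f Hprop Hint Hadj Hseg K (Zf g h i ip) Zk Zv Ze w (Cyc i) Vw
      (fun j _ => Zf_not_sub g h i ip j i (m - 1)) Hi ysw Hysw H5).
    apply (Hpos_gen g hg f Hadj h i ip); auto; kp.
  - apply (corner_BR g f Hprop Hint Hadj Hseg K (Zf g h i ip) Zk Zv Ze (Cyc iq) (Cyc i) Hq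
      (fun j _ => Zf_not_cyc g hg h i ip j iq Hqi (not_eq_sym Hpq)) Hi ysq Hysq H2).
    apply (Hpos_gen g hg f Hadj h i ip); auto; kp.
  - apply (cnt_one g hg f Hprop h i ip); auto.
Qed.

End Cases.

Section Main.
Variable g : nat.
Hypothesis hg : (3 <= g)%nat.
Variable f : Wvert -> rect.
Hypothesis Hprop : forall v, Wvalid g v -> proper_rect (f v).
Hypothesis Hint : forall u v, Wvalid g u -> Wvalid g v -> u <> v ->
       ~ (exists p, in_interior (f u) p /\ in_interior (f v) p).
Hypothesis Hadj : forall u v, Wvalid g u -> Wvalid g v -> u <> v ->
       (Wadj g u v <-> exists p, in_rect (f u) p /\ in_rect (f v) p).
Hypothesis Hseg : forall u v, Wvalid g u -> Wvalid g v -> u <> v ->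
       (exists p, in_rect (f u) p /\ in_rect (f v) p) ->
       meet_in_vertical_segment (f u) (f v).
Local Notation m := (g / 2)%nat.
Local Opaque Nat.div.

Lemma sep_same u v c : Wvalid g u -> Wvalid g v -> Wvalid g c -> u <> v -> u <> c -> v <> c ->
  Wadj g u c -> Wadj g v c ->
  (xl (f u) = xr (f c) /\ xl (f v) = xr (f c)) \/ (xr (f u) = xl (f c) /\ xr (f v) = xl (f c)) ->
  yr (f u) < yl (f v) \/ yr (f v) < yl (f u).
Proof.
  intros Hu Hv Hc Huv Huc Hvc Au Av Hs.
  destruct (Rlt_dec (yr (f u)) (yl (f v))); auto.
  destruct (Rlt_dec (yr (f v)) (yl (f u))); auto.
  exfalso.
  destruct (Hprop u Hu) as [U1 U2]. destruct (Hprop v Hv) as [V1 V2].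
  set (yy := Rmax (yl (f u)) (yl (f v))).
  assert (Y : yl (f u) <= yy /\ yl (f v) <= yy /\ yy <= yr (f u) /\ yy <= yr (f v)).
  { unfold yy, Rmax; destruct (Rle_dec (yl (f u)) (yl (f v))); lra. }
  set (bx := if Rle_dec (xl (f u)) (xr (f c)) then xr (f u) else xl (f u)).
  assert (Ap : exists P, in_rect (f u) P /\ in_rect (f v) P).
  { destruct Hs as [[E1 E2]|[E1 E2]].
    - exists (xl (f u), yy). unfold in_rect; simpl; repeat split; lra.
    - exists (xr (f u), yy). unfold in_rect; simpl; repeat split; lra. }
  assert (Auv := proj2 (Hadj u v Hu Hv Huv) Ap).
  apply (triangle g f Hprop Hadj Hseg u v c); auto.
Qed.

Lemma argmax n : (0 < n)%nat -> exists i0, (i0 < n)%nat /\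
  forall i, (i < n)%nat -> yl (f (Cyc i)) <= yl (f (Cyc i0)).
Proof.
  induction n; intros Hn. lia.
  destruct (Nat.eq_dec n 0).
  - subst. exists 0%nat; split; auto. intros i Hi. replace i with 0%nat by lia. lra.
  - destruct (IHn ltac:(lia)) as [i1 [Hi1 H1]].
    destruct (Rle_dec (yl (f (Cyc n))) (yl (f (Cyc i1)))).
    + exists i1; split; [lia|]. intros i Hi. destruct (Nat.eq_dec i n); [subst; auto|apply H1; lia].
    + exists n; split; [lia|]. intros i Hi. destruct (Nat.eq_dec i n); [subst; lra|].
      assert (H := H1 i ltac:(lia)). lra.
Qed.

Lemma side_h h i0 ip iq : (i0 < g)%nat -> (ip < g)%nat -> (iq < g)%nat -> ip <> i0 -> iq <> i0 ->
  Wadj g (Cyc ip) (Cyc i0) -> Wadj g (Cyc iq) (Cyc i0) ->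
  xr (f (Cyc ip)) = xl (f (Cyc i0)) -> xl (f (Cyc iq)) = xr (f (Cyc i0)) ->
  yl (f (Cyc ip)) <= yl (f (Cyc i0)) -> yl (f (Cyc iq)) <= yl (f (Cyc i0)) ->
  (xr (f (Sub h i0 (m - 1))) = xl (f (Cyc i0)) /\ yr (f (Cyc ip)) < yl (f (Sub h i0 (m - 1)))) \/
  (xl (f (Sub h i0 (m - 1))) = xr (f (Cyc i0)) /\ yr (f (Cyc iq)) < yl (f (Sub h i0 (m - 1)))).
Proof.
  intros Hi Hp Hq Hpi Hqi Ap Aq H1 H2 M1 M2.
  assert (Vw := Vsub g hg h i0 Hi).
  destruct (contact_of g f Hprop Hadj Hseg _ (Cyc i0) Vw Hi ltac:(discriminate) (Wadj_sub_c g h i0))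
    as [[E|E] [O1 O2]].
  - left; split; auto.
    assert (N1 : Sub h i0 (m - 1) <> Cyc ip) by discriminate.
    assert (N2 : Sub h i0 (m - 1) <> Cyc i0) by discriminate.
    assert (N3 : Cyc ip <> Cyc i0) by (intro F; apply Cyc_k in F; lia).
    assert (Hs : (xl (f (Sub h i0 (m - 1))) = xr (f (Cyc i0)) /\ xl (f (Cyc ip)) = xr (f (Cyc i0))) \/
                 (xr (f (Sub h i0 (m - 1))) = xl (f (Cyc i0)) /\ xr (f (Cyc ip)) = xl (f (Cyc i0))))
      by (right; split; auto).
    destruct (sep_same (Sub h i0 (m - 1)) (Cyc ip) (Cyc i0) Vw Hp Hi N1 N2 N3 (Wadj_sub_c g h i0) Ap Hs);
      auto. lra.
  - right; split; auto.
    assert (N1 : Sub h i0 (m - 1) <> Cyc iq) by discriminate.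
    assert (N2 : Sub h i0 (m - 1) <> Cyc i0) by discriminate.
    assert (N3 : Cyc iq <> Cyc i0) by (intro F; apply Cyc_k in F; lia).
    assert (Hs : (xl (f (Sub h i0 (m - 1))) = xr (f (Cyc i0)) /\ xl (f (Cyc iq)) = xr (f (Cyc i0))) \/
                 (xr (f (Sub h i0 (m - 1))) = xl (f (Cyc i0)) /\ xr (f (Cyc iq)) = xl (f (Cyc i0))))
      by (left; split; auto).
    destruct (sep_same (Sub h i0 (m - 1)) (Cyc iq) (Cyc i0) Vw Hq Hi N1 N2 N3 (Wadj_sub_c g h i0) Aq Hs);
      auto. lra.
Qed.

Lemma main_pq i0 ip iq : (i0 < g)%nat -> (ip < g)%nat -> (iq < g)%nat -> ip <> i0 -> iq <> i0 -> ip <> iq ->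
  Wadj g (Cyc ip) (Cyc i0) -> Wadj g (Cyc iq) (Cyc i0) ->
  xr (f (Cyc ip)) = xl (f (Cyc i0)) -> xl (f (Cyc iq)) = xr (f (Cyc i0)) ->
  yl (f (Cyc ip)) <= yl (f (Cyc i0)) -> yl (f (Cyc iq)) <= yl (f (Cyc i0)) -> False.
Proof.
  intros Hi Hp Hq Hpi Hqi Hpq Ap Aq H1 H2 M1 M2.
  assert (SF := side_h false i0 ip iq Hi Hp Hq Hpi Hqi Ap Aq H1 H2 M1 M2).
  assert (ST := side_h true i0 ip iq Hi Hp Hq Hpi Hqi Ap Aq H1 H2 M1 M2).
  destruct SF as [[F1 F2]|[F1 F2]]; destruct ST as [[T1 T2]|[T1 T2]].
  - destruct (sep_same (Sub false i0 (m - 1)) (Sub true i0 (m - 1)) (Cyc i0) (Vsub g hg false i0 Hi)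
      (Vsub g hg true i0 Hi) Hi ltac:(discriminate) ltac:(discriminate) ltac:(discriminate)
      (Wadj_sub_c g false i0) (Wadj_sub_c g true i0) ltac:(right; split; auto)) as [S|S].
    + apply (case2 g hg f Hprop Hint Hadj Hseg false i0 ip iq); auto.
    + apply (case2 g hg f Hprop Hint Hadj Hseg true i0 ip iq); auto.
  - apply (case1 g hg f Hprop Hint Hadj Hseg true i0 ip iq); auto.
  - apply (case1 g hg f Hprop Hint Hadj Hseg false i0 ip iq); auto.
  - destruct (sep_same (Sub false i0 (m - 1)) (Sub true i0 (m - 1)) (Cyc i0) (Vsub g hg false i0 Hi)
      (Vsub g hg true i0 Hi) Hi ltac:(discriminate) ltac:(discriminate) ltac:(discriminate)
      (Wadj_sub_c g false i0) (Wadj_sub_c g true i0) ltac:(left; split; auto)) as [S|S].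
    + apply (case3 g hg f Hprop Hint Hadj Hseg false i0 ip iq); auto.
    + apply (case3 g hg f Hprop Hint Hadj Hseg true i0 ip iq); auto.
Qed.

Lemma no_rep : False.
Proof.
  destruct (argmax g ltac:(lia)) as [i0 [Hi0 Hmax]].
  set (ip := if (i0 + 1 =? g)%nat then 0%nat else (i0 + 1)%nat).
  set (im := if (i0 =? 0)%nat then (g - 1)%nat else (i0 - 1)%nat).
  assert (Hip : (ip < g)%nat /\ ip <> i0) by (unfold ip; destruct (Nat.eqb_spec (i0 + 1) g); lia).
  assert (Him : (im < g)%nat /\ im <> i0) by (unfold im; destruct (Nat.eqb_spec i0 0); lia).
  assert (Hpm : ip <> im) by (unfold ip, im; destruct (Nat.eqb_spec (i0 + 1) g); destruct (Nat.eqb_spec i0 0); lia).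
  destruct Hip as [Hip1 Hip2]. destruct Him as [Him1 Him2].
  assert (Ap : Wadj g (Cyc ip) (Cyc i0)).
  { right. simpl. unfold ip. destruct (Nat.eqb_spec (i0 + 1) g).
    - rewrite e. rewrite Nat.Div0.mod_same; lia.
    - rewrite Nat.mod_small; lia. }
  assert (Am : Wadj g (Cyc im) (Cyc i0)).
  { left. simpl. unfold im. destruct (Nat.eqb_spec i0 0).
    - replace (g - 1 + 1)%nat with g by lia. rewrite Nat.Div0.mod_same; lia.
    - replace (i0 - 1 + 1)%nat with i0 by lia. rewrite Nat.mod_small; lia. }
  assert (Hc : Wvalid g (Cyc i0)) by exact Hi0.
  assert (Np : Cyc ip <> Cyc i0) by (intro E; apply Cyc_k in E; lia).
  assert (Nm : Cyc im <> Cyc i0) by (intro E; apply Cyc_k in E; lia).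
  assert (Npm : Cyc ip <> Cyc im) by (intro E; apply Cyc_k in E; lia).
  destruct (contact_of g f Hprop Hadj Hseg (Cyc ip) (Cyc i0) Hip1 Hc Np Ap) as [[Ep|Ep] [Op1 Op2]];
  destruct (contact_of g f Hprop Hadj Hseg (Cyc im) (Cyc i0) Him1 Hc Nm Am) as [[Em|Em] [Om1 Om2]].
  - destruct (sep_same (Cyc ip) (Cyc im) (Cyc i0) Hip1 Him1 Hc Npm Np Nm Ap Am ltac:(right; split; auto)) as [S|S].
    + assert (X := Hmax im Him1). lra.
    + assert (X := Hmax ip Hip1). lra.
  - apply (main_pq i0 ip im); auto.
  - apply (main_pq i0 im ip); auto.
  - destruct (sep_same (Cyc ip) (Cyc im) (Cyc i0) Hip1 Him1 Hc Npm Np Nm Ap Am ltac:(left; split; auto)) as [S|S].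
    + assert (X := Hmax im Him1). lra.
    + assert (X := Hmax ip Hip1). lra.
Qed.

End Main.

Theorem mainTheorem5 (g : nat) (hg : (3 <= g)%nat) :
  ~ in_2CBU (Wvalid g) (Wadj g).
Proof.
  intros [f [Hprop [Hint [Hadj Hseg]]]].
  exact (no_rep g hg f Hprop Hint Hadj Hseg).
Qed.
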